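(* If $G$ is a prime $\{P_5,\overline{P_5},C_5\}$-free graph, then there is an induced subgraph of $G$ isomorphic to $P_4$ whose two vertices of degree one (in the $P_4$) are simplicial vertices of $G$ and whose two vertices of degree two (in the $P_4$) are antisimplicial vertices of $G$.
   Context: All graphs are finite and simple. $P_n$ is the path on $n$ vertices, $C_n$ the cycle of length $n$, $\overline{G}$ the complement. $G$ is $H$-free if it has no induced subgraph isomorphic to $H$. A vertex $b\notin X$ is mixed on $X$ if it has both a neighbor and a non-neighbor in $X$. A homogeneous set is a set $X\subseteq V(G)$ with $1<|X|<|V(G)|$ such that no vertex outside $X$ is mixed on $X$. $G$ is prime if $|V(G)|\ge4$ and $G$ has no homogeneous set. A vertex $v$ is simplicial if $N(v)$ is a clique, antisimplicial if $V(G)\setminus N(v)$ is a stable set. *)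

(* Defs.v *)
From mathcomp Require Import all_boot.
Set Implicit Arguments. Unset Strict Implicit. Unset Printing Implicit Defensive.

Definition simple_graph (T : finType) (e : rel T) : Prop :=
  symmetric e /\ irreflexive e.

Definition path_rel (n : nat) : rel 'I_n :=
  fun i j => (i.+1 == j :> nat) || (j.+1 == i :> nat).

Arguments path_rel n : clear implicits.

Definition cycle_rel (n : nat) : rel 'I_n :=
  fun i j => (i != j) && ((i.+1 %% n == j :> nat) || (j.+1 %% n == i :> nat)).

Arguments cycle_rel n : clear implicits.

Definition compl_rel (U : finType) (h : rel U) : rel U :=
  fun i j => (i != j) && ~~ h i j.

Definition induced_sub (U T : finType) (h : rel U) (e : rel T) : Prop :=
  exists f : U -> T, injective f /\ forall i j, e (f i) (f j) = h i j.

Definition H_free (U T : finType) (h : rel U) (e : rel T) : Prop :=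
  ~ induced_sub h e.

Definition mixed (T : finType) (e : rel T) (X : {set T}) (b : T) : Prop :=
  b \notin X /\ (exists x, x \in X /\ e b x) /\ (exists y, y \in X /\ ~~ e b y).

Definition homogeneous (T : finType) (e : rel T) (X : {set T}) : Prop :=
  1 < #|X| /\ #|X| < #|T| /\ forall b, ~ mixed e X b.

Definition prime_graph (T : finType) (e : rel T) : Prop :=
  4 <= #|T| /\ forall X : {set T}, ~ homogeneous e X.

Definition simplicial (T : finType) (e : rel T) (v : T) : Prop :=
  forall x y, e v x -> e v y -> x != y -> e x y.

Definition antisimplicial (T : finType) (e : rel T) (v : T) : Prop :=
  forall x y, ~~ e v x -> ~~ e v y -> ~~ e x y.

(* Main.v *)
Require Import Defs.
From mathcomp Require Import all_boot zify.
Set Implicit Arguments. Unset Strict Implicit. Unset Printing Implicit Defensive.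

Lemma mk_ind (T : finType) (e : rel T) (h : rel 'I_5) (a0 a1 a2 a3 a4 : T) :
  uniq [:: a0; a1; a2; a3; a4] ->
  (forall i j : 'I_5, e (nth a0 [:: a0; a1; a2; a3; a4] i)
                        (nth a0 [:: a0; a1; a2; a3; a4] j) = h i j) ->
  induced_sub h e.
Proof.
move=> U H; exists (fun i : 'I_5 => nth a0 [:: a0; a1; a2; a3; a4] i); split=> //.
move=> i j /eqP; rewrite nth_uniq //= => /eqP; exact: val_inj.
Qed.

Ltac solve_e esym eirr :=
  match goal with |- _ = ?r => let E := fresh "E" in case E: r; vm_compute in E; try discriminate E end;
  first [ by rewrite eirr | done | (apply/negbTE; done)
        | (rewrite esym; first [done | (apply/negbTE; done)]) ].

Lemma type_lemma (T : finType) (e : rel T) :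
  symmetric e -> irreflexive e ->
  H_free (path_rel 5) e -> H_free (compl_rel (path_rel 5)) e -> H_free (cycle_rel 5) e ->
  forall w y h1 u h2 : T, uniq [:: w; y; h1; u; h2] ->
  e y h1 -> e h1 u -> e u h2 -> ~~ e y u -> ~~ e y h2 -> ~~ e h1 h2 ->
  e w y -> ~~ e w u -> e w h1 && ~~ e w h2.
Proof.
move=> esym eirr HP HcP HC w y h1 u h2 U Eyh1 Eh1u Euh2 Nyu Nyh2 Nh1h2 Ewy Nwu.
case Ew1: (e w h1); case Ew2: (e w h2) => //=; exfalso.
- apply: HcP; apply: (@mk_ind _ _ _ w u y h2 h1).
    move: U; rewrite /= !inE !negb_or !andbT.
    move=> /andP[/and4P[a1 a2 a3 a4] /andP[/and3P[b1 b2 b3] /andP[/andP[c1 c2] d1]]].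
    by repeat (apply/andP; split); rewrite // eq_sym.
  move=> i j; case: i => [[|[|[|[|[|i]]]]] Hi] //; case: j => [[|[|[|[|[|j]]]]] Hj] //=;
  solve_e esym eirr.
- apply: HC; apply: (@mk_ind _ _ _ w y h1 u h2) => //.
  move=> i j; case: i => [[|[|[|[|[|i]]]]] Hi] //; case: j => [[|[|[|[|[|j]]]]] Hj] //=;
  solve_e esym eirr.
- apply: HP; apply: (@mk_ind _ _ _ w y h1 u h2) => //.
  move=> i j; case: i => [[|[|[|[|[|i]]]]] Hi] //; case: j => [[|[|[|[|[|j]]]]] Hj] //=;
  solve_e esym eirr.
Qed.

Definition ZB (T : finType) (e : rel T) (B : {set T}) :=
  [set z | (z \notin B) && [forall b in B, ~~ e b z]].

Definition cutconn (T : finType) (e : rel T) (B : {set T}) :=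
  forall X : {set T}, X \subset B -> X != set0 -> X != B ->
    exists x y, [/\ x \in X, y \in B, y \notin X & e x y].

Lemma cutconn_ext (T : finType) (e : rel T) (B W : {set T}) :
  symmetric e -> cutconn e B -> B \subset W ->
  (forall w, w \in W -> w \notin B -> exists2 b, b \in B & e b w) -> cutconn e W.
Proof.
move=> esym cB BW HW X XW Xn0 XnW.
case: (boolP (B \subset X)) => BX.
  have [w wW wX] : exists2 w, w \in W & w \notin X.
    apply/subsetPn; apply: contra XnW => WX.
    by rewrite eqEsubset XW.
  have wB : w \notin B by apply: contra wX; apply: (subsetP BX).
  have [b bB ebw] := HW w wW wB.
  by exists b, w; split => //; apply: (subsetP BX).
case: (boolP (X :&: B == set0)) => XB.
  have [x xX] := set0Pn _ Xn0.
  have xW := subsetP XW x xX.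
  have xB : x \notin B.
    by apply/negP => xB; move/eqP: XB => /setP/(_ x); rewrite !inE xX xB.
  have [b bB ebx] := HW x xW xB.
  exists x, b; split => //; first by apply: (subsetP BW).
    by apply/negP => bX; move/eqP: XB => /setP/(_ b); rewrite !inE bX bB.
  by rewrite esym.
have [|||x [y [xXB yB yXB exy]]] := cB (X :&: B).
- by apply: subsetIr.
- by [].
- by apply: contra BX => /eqP <-; apply: subsetIl.
exists x, y; split => //.
- by move: xXB; rewrite inE => /andP[].
- by apply: (subsetP BW).
- by move: yXB; rewrite inE yB andbT.
Qed.

Lemma cutconn1 (T : finType) (e : rel T) (v : T) : cutconn e [set v].
Proof.
by move=> X; rewrite subset1 => /orP[] /eqP -> //; rewrite eqxx.
Qed.

Lemma closed_all (T : finType) (e : rel T) (W R : {set T}) :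
  cutconn e W -> R \subset W -> R != set0 ->
  (forall x y, x \in R -> y \in W -> e x y -> y \in R) -> R = W.
Proof.
move=> cW RW Rn0 cl; case: (eqVneq R W) => // neq.
have [x [y [xR yW yR exy]]] := cW R RW Rn0 neq.
by have := cl x y xR yW exy; rewrite (negbTE yR).
Qed.

Lemma dcon (T : finType) (e : rel T) :
  simple_graph e -> prime_graph e ->
  H_free (path_rel 5) e -> H_free (compl_rel (path_rel 5)) e -> H_free (cycle_rel 5) e ->
  forall n (B : {set T}), #|ZB e B| <= n -> B != set0 -> cutconn e B -> ZB e B != set0 ->
  exists s, s \in ZB e B /\ simplicial e s.
Proof.
move=> [esym eirr] [n4 prm] HP HcP HC n; elim: n => [|n IH] B.
  by rewrite leqn0 cards_eq0 => /eqP -> _ _; rewrite eqxx.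
move=> Hc Bn0 cB Zn0.
case: (boolP [exists x, [&& x \notin B, x \notin ZB e B,
           [exists z in ZB e B, e x z] & [exists z in ZB e B, ~~ e x z]]]).
  move/existsP => [x /and4P[xB xZ /exists_inP[z1 z1Z exz1] /exists_inP[z2 z2Z nexz2]]].
  have [b bB ebx] : exists2 b, b \in B & e b x.
    move: xZ; rewrite inE xB /= => /forall_inPn [b bB]; rewrite negbK => ebx.
    by exists b.
  have sub : ZB e (x |: B) \subset ZB e B.
    apply/subsetP => z; rewrite !inE negb_or => /andP[/andP[_ zB] /forall_inP H].
    rewrite zB /=; apply/forall_inP => bb bbB; apply: H; by rewrite inE bbB orbT.
  have z1n : z1 \notin ZB e (x |: B).
    rewrite inE negb_and; apply/orP; right; apply/forall_inPn; exists x.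
      by rewrite !inE eqxx.
    by rewrite negbK.
  have z2in : z2 \in ZB e (x |: B).
    have z2x : z2 != x by apply: (contraNneq _ xZ) => <-.
    move: (z2Z); rewrite !inE negb_or => /andP[z2B /forall_inP H].
    rewrite z2B z2x /=.
    apply/forall_inP => bb; rewrite !inE => /orP[/eqP Ebb | bbB]; first by rewrite Ebb.
    exact: H.
  have lt : #|ZB e (x |: B)| < #|ZB e B|.
    by apply: proper_card; apply/properP; split => //; exists z1.
  have [||||s [sZ ss]] := IH (x |: B).
  - by rewrite -ltnS (leq_trans lt Hc).
  - by apply/set0Pn; exists x; rewrite setU11.
  - apply: (cutconn_ext esym cB); first by apply: subsetUr.
    move=> w; rewrite !inE => /orP[/eqP -> _ | -> //]; by exists b.
  - by apply/set0Pn; exists z2.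
  by exists s; split => //; apply: (subsetP sub).
move=> Hno.
set Z := ZB e B.
have [b0 b0B] := set0Pn _ Bn0.
have b0Z : b0 \notin Z by rewrite inE b0B.
have Z1 : #|Z| <= 1.
  rewrite leqNgt; apply/negP => c; apply: (prm Z); split => //; split.
    rewrite -cardsT; apply: proper_card; apply/properP; split; first exact: subsetT.
    by exists b0.
  move=> b [bZ [[x [xZ ebx]] [y [yZ neby]]]].
  case bB: (b \in B).
    by move: xZ; rewrite inE => /andP[_ /forall_inP /(_ b bB)]; rewrite ebx.
  apply: (negP Hno); apply/existsP; exists b; rewrite bB bZ /=.
  by apply/andP; split; apply/exists_inP; [exists x | exists y].
have [u Zu] : exists u, Z = [set u].
  apply/cards1P; rewrite eqn_leq Z1 /= lt0n cards_eq0; exact: Zn0.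
have uZ : u \in Z by rewrite Zu set11.
exists u; split => //.
have uB : u \notin B by move: uZ; rewrite inE => /andP[].
have Bnu : forall b, b \in B -> ~~ e b u.
  by move=> b bB; move: uZ; rewrite inE => /andP[_ /forall_inP /(_ b bB)].
have NB : forall w, w != u -> w \notin B -> exists2 b, b \in B & e b w.
  move=> w wu wB; have : w \notin Z by rewrite Zu inE.
  rewrite inE wB /= => /forall_inPn [b bB]; rewrite negbK => ebw; by exists b.
move=> x1 x2 eux1 eux2 nx; case E12: (e x1 x2) => //; exfalso.
set K := [set x | e u x].
pose closedH (H : {set T}) := [&& H \subset K, x1 \in H &
   [forall a in H, forall k in K, ((k != a) && ~~ e a k) ==> (k \in H)]].
have cK : closedH K.
  apply/and3P; split => //; first by rewrite inE.
  by apply/forall_inP => a _; apply/forall_inP => k kK; rewrite kK implybT.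
have [H0 cH0 minH0] := @arg_minnP _ K closedH (fun H => #|H|) cK.
move: cH0 => /and3P[H0K x1H0 /forall_inP clH0].
have clH : forall a k, a \in H0 -> k \in K -> k != a -> ~~ e a k -> k \in H0.
  by move=> a k aH kK ka eak; move: (clH0 a aH) => /forall_inP /(_ k kK); rewrite ka eak.
have x2H0 : x2 \in H0 by apply: (clH x1) => //; [rewrite inE | rewrite eq_sym | rewrite E12].
have uK : u \notin K by rewrite inE eirr.
have uH0 : u \notin H0 by apply: contra uK; apply: (subsetP H0K).
apply: (prm H0); split; first by apply/card_gt1P; exists x1, x2.
split.
  rewrite -cardsT; apply: proper_card; apply/properP; split; first exact: subsetT.
  by exists u.
move=> b [bH [[p [pH ebp]] [q [qH nebq]]]].
have qK := subsetP H0K q qH; have pK := subsetP H0K p pH.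
case: (eqVneq b u) => [bu | bu].
  by move: nebq; rewrite bu; move: qK; rewrite inE => ->.
case bK: (b \in K).
  have bq : b != q by apply: (contraNneq _ bH) => ->.
  have nqb : ~~ e q b by rewrite esym.
  by move: bH; rewrite (clH q b qH bK bq nqb).
have [h1 [h2 [h1H h2H ebh1 nebh2 nh]]] :
    exists h1 h2, [/\ h1 \in H0, h2 \in H0, e b h1, ~~ e b h2 & ~~ e h1 h2].
  case: (boolP [exists h1 in H0, exists h2 in H0, [&& e b h1, ~~ e b h2 & ~~ e h1 h2]]).
    move/exists_inP => [h1 h1H /exists_inP [h2 h2H /and3P[? ? ?]]].
    by exists h1, h2.
  move=> Hn; exfalso.
  have none : forall h1 h2, h1 \in H0 -> h2 \in H0 -> e b h1 -> ~~ e b h2 -> e h1 h2.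
    move=> h1 h2 h1H h2H ebh1 nebh2; apply/negPn/negP => nh; apply: (negP Hn).
    by apply/exists_inP; exists h1 => //; apply/exists_inP; exists h2 => //; apply/and3P.
  case Ebx1: (e b x1).
    pose H' := [set h in H0 | e b h].
    have cH' : closedH H'.
      apply/and3P; split.
      - by apply/subsetP => h; rewrite inE => /andP[hH _]; apply: (subsetP H0K).
      - by rewrite inE x1H0 Ebx1.
      apply/forall_inP => a; rewrite inE => /andP[aH eba].
      apply/forall_inP => k kK; apply/implyP => /andP[ka eak].
      rewrite inE (clH a k) //=; apply/negPn/negP => nebk.
      by move: (none a k aH (clH a k aH kK ka eak) eba nebk); rewrite (negbTE eak).
    have := minH0 H' cH'; rewrite leqNgt => /negP; apply.
    apply: proper_card; apply/properP; split.
      by apply/subsetP => h; rewrite inE => /andP[].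
    by exists q => //; rewrite inE (negbTE nebq) andbF.
  pose H' := [set h in H0 | ~~ e b h].
  have cH' : closedH H'.
    apply/and3P; split.
    - by apply/subsetP => h; rewrite inE => /andP[hH _]; apply: (subsetP H0K).
    - by rewrite inE x1H0 Ebx1.
    apply/forall_inP => a; rewrite inE => /andP[aH neba].
    apply/forall_inP => k kK; apply/implyP => /andP[ka eak].
    rewrite inE (clH a k) //=; apply/negP => ebk.
    by move: (none k a (clH a k aH kK ka eak) aH ebk neba); rewrite esym (negbTE eak).
  have := minH0 H' cH'; rewrite leqNgt => /negP; apply.
  apply: proper_card; apply/properP; split.
    by apply/subsetP => h; rewrite inE => /andP[].
  by exists p => //; rewrite inE ebp andbF.
have h1K := subsetP H0K h1 h1H; have h2K := subsetP H0K h2 h2H.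
have euh1 : e u h1 by move: h1K; rewrite inE.
have euh2 : e u h2 by move: h2K; rewrite inE.
set W := [set w | (w \notin K) && (w != u)].
set W1 := [set w in W | e w h1 && ~~ e w h2].
have cW : cutconn e W.
  apply: (cutconn_ext esym cB).
    apply/subsetP => b' b'B; rewrite inE; apply/andP; split.
      by rewrite inE esym; apply: Bnu.
    by apply: contra uB => /eqP <-.
  move=> w; rewrite inE => /andP[_ wu] wB; exact: NB.
have nub : ~~ e u b by move: bK; rewrite inE => ->.
have bW1 : b \in W1 by rewrite !inE nub bu ebh1 nebh2.
have W1W : W1 = W.
  apply: (closed_all cW); first by apply/subsetP => w; rewrite inE => /andP[].
    by apply/set0Pn; exists b.
  move=> x y; rewrite !inE => /andP[/andP[xK xu] /andP[exh1 nexh2]] /andP[yK yu] exy.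
  rewrite yK yu /=.
  have Hu : forall w, ~~ e u w -> ~~ e w u by move=> w; rewrite esym.
  apply: (type_lemma esym eirr HP HcP HC (w := y) (y := x) (h1 := h1) (u := u) (h2 := h2)) => //.
  - rewrite /= !inE !negb_or !andbT.
    have ne : forall a c, e u a -> ~~ e u c -> (c != a) && (a != c).
      by move=> a c ua uc; apply/andP; split; apply/negP => /eqP E; move: uc ua; rewrite E => /negP.
    have [? ?] := andP (ne _ _ euh1 yK); have [? ?] := andP (ne _ _ euh2 yK).
    have [? ?] := andP (ne _ _ euh1 xK); have [? ?] := andP (ne _ _ euh2 xK).
    have /andP[? ?] : (h1 != u) && (u != h1) by apply/andP; split; apply/negP => /eqP E; move: euh1; rewrite E eirr.
    have /andP[? ?] : (h2 != u) && (u != h2) by apply/andP; split; apply/negP => /eqP E; move: euh2; rewrite E eirr.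
    have yx : y != x by apply/negP => /eqP E; move: exy; rewrite E eirr.
    have h12 : h1 != h2 by apply/negP => /eqP E; move: ebh1; rewrite E (negbTE nebh2).
    by repeat (apply/andP; split); rewrite // eq_sym.
  - by rewrite esym.
  - exact: Hu.
  - by rewrite esym.
  - exact: Hu.
have h2B : h2 \notin B by apply/negP => h2B; move: (Bnu h2 h2B); rewrite esym euh2.
have h2u : h2 != u by apply/negP => /eqP E; move: euh2; rewrite E eirr.
have [b' b'B eb'h2] := NB h2 h2u h2B.
have : b' \in W.
  rewrite !inE; apply/andP; split; first by rewrite esym; apply: Bnu.
  by apply: (contraNneq _ uB) => <-.
rewrite -W1W !inE => /andP[_ /andP[_]]; by rewrite eb'h2.
Qed.

Lemma d1 (T : finType) (e : rel T) :
  simple_graph e -> prime_graph e ->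
  H_free (path_rel 5) e -> H_free (compl_rel (path_rel 5)) e -> H_free (cycle_rel 5) e ->
  forall v, exists s, [/\ s != v, ~~ e v s & simplicial e s].
Proof.
move=> sg pg HP HcP HC v; have [esym eirr] := sg; have [n4 prm] := pg.
have Zn0 : ZB e [set v] != set0.
  apply/negP => /eqP Z0; apply: (prm ([set: T] :\ v)).
  have Hc : #|T| = (#|[set: T] :\ v|).+1 by rewrite -cardsT (cardsD1 v) in_setT.
  split; first by lia.
  split; first by lia.
  move=> b [bX [_ [y [yX neby]]]].
  have bv : b = v by move: bX; rewrite !inE andbT negbK => /eqP.
  have : y \in ZB e [set v].
    move: yX; rewrite !inE andbT => yv; rewrite yv /=.
    by apply/forall_inP => b'; rewrite inE => /eqP ->; rewrite -bv.
  by rewrite Z0 inE.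
have [|s [sZ ss]] := @dcon T e sg pg HP HcP HC _ [set v] (leqnn _) _ (@cutconn1 T e v) Zn0.
  by apply/set0Pn; exists v; rewrite set11.
exists s; move: sZ; rewrite !inE => /andP[sv /forall_inP H]; split => //.
by apply: H; rewrite set11.
Qed.

Lemma compl_sg (T : finType) (e : rel T) : simple_graph e -> simple_graph (compl_rel e).
Proof.
move=> [esym eirr]; split; first by move=> x y; rewrite /compl_rel eq_sym esym.
by move=> x; rewrite /compl_rel eqxx.
Qed.

Lemma compl_pg (T : finType) (e : rel T) : prime_graph e -> prime_graph (compl_rel e).
Proof.
move=> [n4 prm]; split => // X [c1 [c2 hm]]; apply: (prm X); do 2 split => //.
move=> b [bX [[x [xX ebx]] [y [yX neby]]]]; apply: (hm b); split => //; split.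
  exists y; split => //; rewrite /compl_rel neby andbT.
  by apply: (contraNneq _ bX) => ->.
by exists x; split => //; rewrite /compl_rel ebx andbF.
Qed.

Lemma induced_compl (T U : finType) (e : rel T) (h : rel U) :
  irreflexive e -> induced_sub h (compl_rel e) -> induced_sub (compl_rel h) e.
Proof.
move=> eirr [f [finj H]]; exists f; split => // i j; rewrite /compl_rel.
case: (eqVneq i j) => [-> | ij] /=; first by rewrite eirr.
have fij : f i != f j by apply: contra ij => /eqP /finj ->.
by move: (H i j); rewrite /compl_rel fij /= => <-; rewrite negbK.
Qed.

Lemma induced_ext (T U : finType) (e : rel T) (h h' : rel U) :
  (forall i j, h i j = h' i j) -> induced_sub h e -> induced_sub h' e.
Proof. by move=> E [f [finj H]]; exists f; split => // i j; rewrite H E. Qed.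

Lemma compl_compl (U : finType) (h : rel U) : irreflexive h ->
  forall i j, compl_rel (compl_rel h) i j = h i j.
Proof.
move=> hirr i j; rewrite /compl_rel; case: (eqVneq i j) => [-> | ij] /=.
  by rewrite hirr.
by rewrite negbK.
Qed.

Definition sig5 (i : 'I_5) : 'I_5 := Ordinal (ltn_pmod (2 * i) (isT : 0 < 5)).
Definition tau5 (i : 'I_5) : 'I_5 := Ordinal (ltn_pmod (3 * i) (isT : 0 < 5)).

Lemma sig5K : cancel sig5 tau5.
Proof.
by move=> i; apply: val_inj; case: i => [[|[|[|[|[|?]]]]] ?] //; vm_compute; reflexivity.
Qed.

Lemma sig5_ok (i j : 'I_5) : compl_rel (cycle_rel 5) (sig5 i) (sig5 j) = cycle_rel 5 i j.
Proof.
case: i => [[|[|[|[|[|?]]]]] ?] //; case: j => [[|[|[|[|[|?]]]]] ?] //; vm_compute; reflexivity.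
Qed.

Lemma induced_C5 (T : finType) (e : rel T) :
  induced_sub (compl_rel (cycle_rel 5)) e -> induced_sub (cycle_rel 5) e.
Proof.
move=> [f [finj H]]; exists (fun i => f (sig5 i)); split.
  by move=> i j /finj /(can_inj sig5K).
by move=> i j; rewrite H sig5_ok.
Qed.

Lemma path_irr : irreflexive (path_rel 5).
Proof. by move=> i; rewrite /path_rel; case: i => [[|[|[|[|[|?]]]]] ?]. Qed.

Lemma compl_simp_anti (T : finType) (e : rel T) (v : T) :
  simple_graph e -> simplicial (compl_rel e) v -> antisimplicial e v.
Proof.
move=> [esym eirr] H x y nvx nvy.
case: (eqVneq x y) => [-> | xy]; first by rewrite eirr.
case: (eqVneq v x) => [<- | vx] //; case: (eqVneq v y) => [<- | vy]; first by rewrite esym.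
have := H x y; rewrite /compl_rel vx vy nvx nvy xy => /(_ isT isT isT).
by move=> /andP[].
Qed.

Lemma d1' (T : finType) (e : rel T) :
  simple_graph e -> prime_graph e ->
  H_free (path_rel 5) e -> H_free (compl_rel (path_rel 5)) e -> H_free (cycle_rel 5) e ->
  forall v, exists k, e v k /\ antisimplicial e k.
Proof.
move=> sg pg HP HcP HC v; have [esym eirr] := sg.
have [|||s [sv nvs ss]] := d1 (compl_sg sg) (compl_pg pg) _ _ _ v.
- by move=> /(induced_compl eirr); exact: HcP.
- move=> /(induced_compl eirr) /(induced_ext (compl_compl path_irr)); exact: HP.
- by move=> /(induced_compl eirr) /induced_C5; exact: HC.
exists s; split; last exact: compl_simp_anti.
by move: nvs; rewrite /compl_rel eq_sym sv /= negbK.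
Qed.

Definition simpb (T : finType) (e : rel T) v :=
  [forall x, forall y, e v x ==> e v y ==> (x != y) ==> e x y].
Definition asimpb (T : finType) (e : rel T) v :=
  [forall x, forall y, ~~ e v x ==> ~~ e v y ==> ~~ e x y].

Lemma simpbP (T : finType) (e : rel T) v : reflect (simplicial e v) (simpb e v).
Proof.
apply: (iffP forallP) => [H x y a b c | H x].
  by move: (H x) => /forallP /(_ y); rewrite a b c.
by apply/forallP => y; do 3!apply/implyP => ?; apply: H.
Qed.

Lemma asimpbP (T : finType) (e : rel T) v : reflect (antisimplicial e v) (asimpb e v).
Proof.
apply: (iffP forallP) => [H x y a b | H x].
  by move: (H x) => /forallP /(_ y); rewrite a b.
by apply/forallP => y; do 2!apply/implyP => ?; apply: H.
Qed.

Lemma two_hom (T : finType) (e : rel T) (a b : T) :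
  prime_graph e -> a != b ->
  (forall c, c != a -> c != b -> e c a = e c b) -> False.
Proof.
move=> [n4 prm] ab H; apply: (prm [set a; b]); split; first by rewrite cards2 ab.
split; first by rewrite cards2 ab; lia.
move=> c [cX [[x [xX ecx]] [y [yX necy]]]].
move: cX; rewrite !inE negb_or => /andP[ca cb].
move: xX yX ecx necy; rewrite !inE => /orP[]/eqP-> /orP[]/eqP-> ecx necy.
- by rewrite ecx in necy.
- by rewrite -H // ecx in necy.
- by rewrite H // ecx in necy.
- by rewrite ecx in necy.
Qed.

Lemma simp_adj (T : finType) (e : rel T) (s1 s2 : T) :
  simple_graph e -> prime_graph e -> simplicial e s1 -> simplicial e s2 -> ~~ e s1 s2.
Proof.
move=> [esym eirr] pg H1 H2; apply/negP => es.
have s12 : s1 != s2 by apply/negP => /eqP E; move: es; rewrite E eirr.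
apply: (two_hom pg s12) => c c1 c2.
case E1: (e c s1); case E2: (e c s2) => //.
- by move: (H1 c s2); rewrite esym E1 es c2 E2 => /(_ isT isT isT).
- by move: (H2 c s1); rewrite esym E2 (esym s2 s1) es c1 E1 => /(_ isT isT isT).
Qed.

Lemma asimp_nadj (T : finType) (e : rel T) (k1 k2 : T) :
  simple_graph e -> prime_graph e -> k1 != k2 ->
  antisimplicial e k1 -> antisimplicial e k2 -> e k1 k2.
Proof.
move=> [esym eirr] pg k12 H1 H2; apply/negPn/negP => nk.
apply: (two_hom pg k12) => c c1 c2.
case E1: (e c k1); case E2: (e c k2) => //.
- by move: (H2 c k1); rewrite esym E2 (esym k2 k1) (negbTE nk) E1 => /(_ isT isT).
- by move: (H1 c k2); rewrite esym E1 (negbTE nk) E2 => /(_ isT isT).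
Qed.

Theorem lemma3p6 (T : finType) (e : rel T) :
  simple_graph e ->
  prime_graph e ->
  H_free (path_rel 5) e ->
  H_free (compl_rel (path_rel 5)) e ->
  H_free (cycle_rel 5) e ->
  exists a b c d : T,
    [/\ uniq [:: a; b; c; d],
        [/\ e a b, e b c & e c d],
        [/\ ~~ e a c, ~~ e b d & ~~ e a d],
        simplicial e a /\ simplicial e d &
        antisimplicial e b /\ antisimplicial e c].
Proof.
move=> sg pg HP HcP HC; have [esym eirr] := sg; have [n4 _] := pg.
have : 0 < #|T| by lia.
move/card_gt0P => [t0 _].
have [k0 [_ ak0]] := d1' sg pg HP HcP HC t0.
pose SS k := [set s | simpb e s && ((s == k) || e k s)].
have [ks /asimpbP aks maxks] := @arg_maxnP _ k0 (asimpb e) (fun k => #|SS k|) (introT (asimpbP _ _) ak0).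
have [s' [s'ks nkss' ss']] := d1 sg pg HP HcP HC ks.
have [k' [es'k' ak']] := d1' sg pg HP HcP HC s'.
have s'k' : s' \in SS k' by rewrite inE (introT (simpbP _ _) ss') esym es'k' orbT.
have s'ks' : s' \notin SS ks by rewrite inE negb_and negb_or s'ks nkss' orbT.
have : ~~ (SS ks \subset SS k').
  apply/negP => sub; have H := maxks k' (introT (asimpbP _ _) ak').
  have H' : #|SS ks| < #|SS k'|.
    by apply: proper_card; apply/properP; split => //; exists s'.
  move: H H'; rewrite /=; lia.
move/subsetPn => [s sks snk'].
move: sks; rewrite inE => /andP[/simpbP ss sks].
move: snk'; rewrite inE (introT (simpbP _ _) ss) /= negb_or => /andP[sk' nk's].
have ksk' : ks != k' by apply/negP => /eqP E; move: nkss'; rewrite E esym es'k'.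
have eksk' : e ks k' := asimp_nadj sg pg ksk' aks ak'.
have sks' : s != ks.
  by apply/negP => /eqP E; move: nk's; rewrite E esym eksk'.
have ekss : e ks s by move: sks; rewrite (negbTE sks').
exists s, ks, k', s'; split.
- rewrite /= !inE !negb_or sks' sk' /= andbT.
  have ss's : s != s' by apply/negP => /eqP E; move: s'ks'; rewrite -E inE (introT (simpbP _ _) ss) ekss orbT.
  have k's' : k' != s' by apply/negP => /eqP E; move: es'k'; rewrite E eirr.
  by rewrite ss's ksk' eq_sym s'ks k's'.
- by rewrite esym ekss eksk' esym es'k'.
- by rewrite esym nk's nkss' (simp_adj sg pg ss ss').
- by [].
- by [].
Qed.
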